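(* Let $\Gamma$ be a hyperbolic group whose elliptic (i.e. finite) subgroups are abelian. The following are equivalent: (1) every maximal elliptic subgroup of $\Gamma$ is malnormal; (2) no non-trivial elliptic subgroup of $\Gamma$ is normalised by a loxodromic (i.e. infinite order) element.
   Context: A subgroup $H\le\Gamma$ is malnormal if $H\cap gHg^{-1}=\{1\}$ for every $g\in\Gamma\setminus H$. Elliptic and loxodromic refer to the action of $\Gamma$ on a Cayley graph (elliptic subgroups are the finite subgroups, loxodromic elements are the infinite order elements). *)

(* Defs.v *)
From Stdlib Require Import List ZArith Lia.
Import ListNotations.
Set Implicit Arguments.

Record group := Group {
  carrier :> Type;
  mul : carrier -> carrier -> carrier;
  one : carrier;
  inv : carrier -> carrier;
  mulA : forall x y z, mul x (mul y z) = mul (mul x y) z;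
  mul1g : forall x, mul one x = x;
  mulg1 : forall x, mul x one = x;
  mulVg : forall x, mul (inv x) x = one;
  mulgV : forall x, mul x (inv x) = one
}.
Arguments mul {g} _ _.
Arguments one {g}.
Arguments inv {g} _.

Section Defs.
Variable G : group.

Fixpoint gpow (x : G) (n : nat) : G :=
  match n with O => one | S k => mul x (gpow x k) end.

Definition conj (g h : G) : G := mul (mul g h) (inv g).

Definition word_prod (w : list G) : G := fold_right (fun a b => mul a b) one w.

Definition letter (S : list G) (a : G) : Prop := In a S \/ exists s, In s S /\ a = inv s.

Definition has_word_of_length (S : list G) (g : G) (n : nat) : Prop :=
  exists w : list G, Forall (letter S) w /\ word_prod w = g /\ length w = n.

Definition generates (S : list G) : Prop :=
  forall g : G, exists n, has_word_of_length S g n.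

(* n is the word-metric distance d_S(x,y) = |x^-1 y|_S
   (= the graph distance between vertices x, y in the Cayley graph). *)
Definition word_dist (S : list G) (x y : G) (n : nat) : Prop :=
  has_word_of_length S (mul (inv x) y) n /\
  forall m, has_word_of_length S (mul (inv x) y) m -> n <= m.

(* Gromov four-point condition (doubled Gromov products, to stay integral):
   (x|y)_w >= min((x|z)_w, (y|z)_w) - delta. *)
Definition gromov_hyperbolic_metric (S : list G) (delta : nat) : Prop :=
  forall (x y z w : G) (dxw dyw dzw dxy dxz dyz : nat),
    word_dist S x w dxw -> word_dist S y w dyw -> word_dist S z w dzw ->
    word_dist S x y dxy -> word_dist S x z dxz -> word_dist S y z dyz ->
    (Z.of_nat dxw + Z.of_nat dyw - Z.of_nat dxy + 2 * Z.of_nat delta >=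
     Z.min (Z.of_nat dxw + Z.of_nat dzw - Z.of_nat dxz)
           (Z.of_nat dyw + Z.of_nat dzw - Z.of_nat dyz))%Z.

Definition hyperbolic_group : Prop :=
  exists (S : list G) (delta : nat), generates S /\ gromov_hyperbolic_metric S delta.

Definition subgroup (H : G -> Prop) : Prop :=
  H one /\ (forall x y, H x -> H y -> H (mul x y)) /\ (forall x, H x -> H (inv x)).

Definition finite_set (H : G -> Prop) : Prop :=
  exists l : list G, forall x, H x -> In x l.

Definition elliptic_subgroup (H : G -> Prop) : Prop := subgroup H /\ finite_set H.

Definition abelian_set (H : G -> Prop) : Prop :=
  forall x y, H x -> H y -> mul x y = mul y x.

Definition maximal_elliptic (H : G -> Prop) : Prop :=
  elliptic_subgroup H /\
  forall K, elliptic_subgroup K -> (forall x, H x -> K x) -> forall x, K x -> H x.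

Definition malnormal (H : G -> Prop) : Prop :=
  forall g, ~ H g -> forall y, H y -> (exists h, H h /\ y = conj g h) -> y = one.

Definition normalises (g : G) (H : G -> Prop) : Prop :=
  (forall h, H h -> H (conj g h)) /\ (forall y, H y -> exists h, H h /\ y = conj g h).

Definition loxodromic (g : G) : Prop := forall n, 0 < n -> gpow g n <> one.

Definition nontrivial (H : G -> Prop) : Prop := exists h, H h /\ h <> one.

End Defs.

Arguments subgroup {G} H.
Arguments finite_set {G} H.
Arguments elliptic_subgroup {G} H.
Arguments abelian_set {G} H.
Arguments maximal_elliptic {G} H.
Arguments malnormal {G} H.
Arguments normalises {G} g H.
Arguments loxodromic {G} g.
Arguments nontrivial {G} H.

(* Main.v *)
Require Import Defs.
From Stdlib Require Import List ZArith.
From Stdlib Require Import List ZArith Lia Arith Classical ClassicalEpsilon.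
Import ListNotations.

Arguments mulA {g} x y z.
Arguments mul1g {g} x.
Arguments mulg1 {g} x.
Arguments mulVg {g} x.
Arguments mulgV {g} x.
Arguments gpow {G} x n.
Arguments conj {G} g h.
Arguments word_prod {G} w.
Arguments has_word_of_length {G} S g n.
Arguments word_dist {G} S x y n.
Arguments letter {G} S a.

Section Grp.
Context {G : group}.

Lemma mulKg (x y : G) : mul (inv x) (mul x y) = y.
Proof. rewrite mulA, mulVg, mul1g; reflexivity. Qed.
Lemma mulKVg (x y : G) : mul x (mul (inv x) y) = y.
Proof. rewrite mulA, mulgV, mul1g; reflexivity. Qed.
Lemma mulgK (x y : G) : mul (mul y x) (inv x) = y.
Proof. rewrite <- mulA, mulgV, mulg1; reflexivity. Qed.
Lemma mulgKV (x y : G) : mul (mul y (inv x)) x = y.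
Proof. rewrite <- mulA, mulVg, mulg1; reflexivity. Qed.
Lemma mul_cancel_l (a x y : G) : mul a x = mul a y -> x = y.
Proof. intro H. rewrite <- (mulKg a x), <- (mulKg a y), H; reflexivity. Qed.
Lemma mul_cancel_r (a x y : G) : mul x a = mul y a -> x = y.
Proof. intro H. rewrite <- (mulgK a x), <- (mulgK a y), H; reflexivity. Qed.
Lemma inv_uniq (x y : G) : mul x y = one -> inv x = y.
Proof. intro H. rewrite <- (mulKg x y), H, mulg1; reflexivity. Qed.
Lemma inv_inv (x : G) : inv (inv x) = x.
Proof. apply inv_uniq, mulVg. Qed.
Lemma inv_one : inv (@one G) = one.
Proof. apply inv_uniq, mul1g. Qed.
Lemma inv_mul (x y : G) : inv (mul x y) = mul (inv y) (inv x).
Proof. apply inv_uniq. rewrite <- mulA, (mulA y), mulgV, mul1g, mulgV; reflexivity. Qed.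

Lemma gpow_add (x : G) m n : gpow x (m + n) = mul (gpow x m) (gpow x n).
Proof. induction m; simpl. rewrite mul1g; auto. rewrite IHm, mulA; auto. Qed.
Lemma gpow_mul (x : G) m n : gpow x m = one -> gpow x (m * n) = one.
Proof. intro H. induction n. rewrite Nat.mul_0_r; reflexivity.
 rewrite Nat.mul_succ_r, gpow_add, IHn, H, mulg1; reflexivity. Qed.
Lemma gpow_mod (x : G) n k : gpow x n = one -> n <> 0 -> gpow x k = gpow x (k mod n).
Proof. intros H Hn. rewrite (Nat.div_mod k n Hn) at 1. rewrite gpow_add.
 rewrite (gpow_mul x n (k / n) H), mul1g; reflexivity. Qed.

Lemma conj_one (g h : G) : conj g h = one -> h = one.
Proof. unfold conj. intro H. apply (mul_cancel_l g). rewrite mulg1.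
 apply (mul_cancel_r (inv g)). rewrite H, mulgV; reflexivity. Qed.

Lemma nat_min (P : nat -> Prop) n0 : P n0 -> exists n, P n /\ forall m, P m -> n <= m.
Proof.
 induction n0 as [n0 IH] using lt_wf_ind. intro H.
 destruct (classic (exists m, m < n0 /\ P m)) as [[m [Hm Pm]]|Hn].
 - exact (IH m Hm Pm).
 - exists n0; split; auto. intros m Pm. destruct (le_gt_dec n0 m); auto.
   exfalso; apply Hn; eauto.
Qed.

Lemma nat_max (P : nat -> Prop) B n0 : (forall n, P n -> n <= B) -> P n0 ->
  exists n, P n /\ forall m, P m -> m <= n.
Proof.
 intros HB. remember (B - n0) as k. revert n0 Heqk.
 induction k as [k IH] using lt_wf_ind. intros n0 Hk H0.
 destruct (classic (exists m, n0 < m /\ P m)) as [[m [Hm Pm]]|Hn].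
 - apply (IH (B - m)) with m; auto. pose proof (HB m Pm). lia.
 - exists n0; split; auto. intros m Pm. destruct (le_gt_dec m n0); auto.
   exfalso; apply Hn; eauto.
Qed.

Lemma exact_list (K : G -> Prop) : finite_set K ->
  exists l, NoDup l /\ forall x, In x l <-> K x.
Proof.
 intros [l Hl].
 assert (exists l', NoDup l' /\ forall x, In x l' <-> (In x l /\ K x)) as [l' [N H]].
 { clear Hl. induction l as [|a l [l' [N H]]].
   - exists nil; split; [constructor|]. simpl; tauto.
   - destruct (classic (K a /\ ~ In a l')) as [[Ka Na]|C].
     + exists (a :: l'); split; [constructor; auto|]. intro x; simpl; rewrite H.
       split; [intros [<-|[? ?]]; auto|]. intros [[<-|?] ?]; auto.
     + exists l'; split; auto. intro x; simpl; rewrite H. split; [tauto|].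
       intros [[E|?] ?]; auto. subst x. destruct (classic (In a l')) as [I|I].
       apply H in I; tauto. exfalso; auto. }
 exists l'; split; auto. intro x; rewrite H; split; [tauto|]. intro; split; auto.
Qed.

Lemma gpow_in (K : G -> Prop) x n : subgroup K -> K x -> K (gpow x n).
Proof. intros [H1 [Hm _]] Hx. induction n; simpl; auto. Qed.

Lemma lox_inj (x : G) : loxodromic x -> forall i j, gpow x i = gpow x j -> i = j.
Proof.
 intros L. assert (forall i k, gpow x i = gpow x (i + k) -> k = 0).
 { intros i k E. rewrite gpow_add in E. rewrite <- (mulg1 (gpow x i)) in E at 1.
   apply mul_cancel_l in E. destruct k; auto. exfalso; apply (L (S k)); auto; lia. }
 intros i j E. destruct (le_gt_dec i j).
 - replace j with (i + (j - i)) in E by lia. apply H in E. lia.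
 - replace i with (j + (i - j)) in E by lia. symmetry in E. apply H in E. lia.
Qed.

Lemma elliptic_not_lox (K : G -> Prop) x : elliptic_subgroup K -> K x -> ~ loxodromic x.
Proof.
 intros [SK [l Hl]] Kx L.
 assert (NoDup (map (gpow x) (seq 0 (S (length l))))).
 { apply NoDup_map_NoDup_ForallPairs; [|apply seq_NoDup].
   intros i j _ _ E. apply (lox_inj x L); auto. }
 apply NoDup_incl_length with (l' := l) in H.
 - rewrite length_map, length_seq in H. lia.
 - intros y Hy. apply in_map_iff in Hy. destruct Hy as [n [<- _]]. apply Hl. apply gpow_in; auto.
Qed.

Lemma elliptic_order (K : G -> Prop) x : elliptic_subgroup K -> K x -> exists n, 0 < n /\ gpow x n = one.
Proof.
 intros E Kx. pose proof (elliptic_not_lox K x E Kx). apply NNPP. intro C. apply H.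
 intros n Hn E'. apply C; eauto.
Qed.

End Grp.
From Stdlib Require Import List ZArith Lia Arith Classical ClassicalEpsilon.
Import ListNotations.

Section Metric.
Variable G : group.
Variable gs : list G.
Hypothesis Hgen : generates G gs.

Definition letters : list G := gs ++ map inv gs.
Fixpoint words (n : nat) : list (list G) :=
  match n with 0 => [nil] | S k => flat_map (fun w => map (fun a => a :: w) letters) (words k) end.
Definition ball (R : nat) : list G :=
  flat_map (fun n => map word_prod (words n)) (seq 0 (S R)).

Lemma in_words w : Forall (letter gs) w -> In w (words (length w)).
Proof.
 induction w as [|a w IH]; simpl; auto. intro F; inversion F; subst.
 apply in_flat_map. exists w; split; auto. apply in_map_iff. exists a; split; auto.
 unfold letters. apply in_app_iff. destruct H1 as [?|[s [Hs ->]]]; auto.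
 right; apply in_map; auto.
Qed.

Lemma in_ball g n R : has_word_of_length gs g n -> n <= R -> In g (ball R).
Proof.
 intros [w [F [E L]]] HR. unfold ball. apply in_flat_map. exists n; split.
 apply in_seq; lia. apply in_map_iff. exists w; split; auto. subst n; apply in_words; auto.
Qed.

Lemma word_prod_app (w1 w2 : list G) : word_prod (w1 ++ w2) = mul (word_prod w1) (word_prod w2).
Proof. induction w1; simpl. rewrite mul1g; auto. rewrite IHw1, mulA; auto. Qed.

Lemma hw_nil : has_word_of_length gs one 0.
Proof. exists nil; repeat split; auto. Qed.

Lemma hw_app g1 g2 n1 n2 : has_word_of_length gs g1 n1 -> has_word_of_length gs g2 n2 ->
  has_word_of_length gs (mul g1 g2) (n1 + n2).
Proof.
 intros [w1 [F1 [E1 L1]]] [w2 [F2 [E2 L2]]]. exists (w1 ++ w2). repeat split.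
 apply Forall_app; auto. rewrite word_prod_app; subst; auto. rewrite length_app; subst; auto.
Qed.

Lemma hw_inv g n : has_word_of_length gs g n -> has_word_of_length gs (inv g) n.
Proof.
 intros [w [F [E L]]]. exists (rev (map inv w)). repeat split.
 - apply Forall_rev. apply Forall_map. eapply Forall_impl; [|exact F].
   intros a [Ha|[s [Hs ->]]]. right; eauto. left; rewrite inv_inv; auto.
 - subst g. clear. induction w as [|a w IH]; simpl. symmetry; apply inv_one.
   rewrite word_prod_app, IH. simpl. rewrite mulg1, inv_mul; auto.
 - rewrite length_rev, length_map; auto.
Qed.

Lemma hw_split g n a : has_word_of_length gs g n -> a <= n ->
  exists g1 g2, g = mul g1 g2 /\ has_word_of_length gs g1 a /\ has_word_of_length gs g2 (n - a).
Proof.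
 intros [w [F [E L]]] Ha. exists (word_prod (firstn a w)), (word_prod (skipn a w)).
 rewrite <- (firstn_skipn a w) in F. apply Forall_app in F. destruct F as [F1 F2].
 split; [|split].
 - rewrite <- word_prod_app, firstn_skipn; auto.
 - exists (firstn a w); repeat split; auto. apply firstn_length_le; lia.
 - exists (skipn a w); repeat split; auto. rewrite length_skipn; lia.
Qed.

Lemma hw_zero g : has_word_of_length gs g 0 -> g = one.
Proof. intros [w [_ [E L]]]. destruct w; simpl in *; try discriminate. auto. Qed.

Lemma dist_ex (x y : G) : exists n, word_dist gs x y n.
Proof.
 destruct (Hgen (mul (inv x) y)) as [n0 H].
 destruct (nat_min (fun n => has_word_of_length gs (mul (inv x) y) n) n0 H) as [n [H1 H2]].
 exists n; split; auto.
Qed.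

Definition dist (x y : G) : nat := proj1_sig (constructive_indefinite_description _ (dist_ex x y)).

Lemma dist_spec x y : word_dist gs x y (dist x y).
Proof. unfold dist. destruct (constructive_indefinite_description _ _); auto. Qed.

Lemma dist_le x y n : has_word_of_length gs (mul (inv x) y) n -> dist x y <= n.
Proof. intro H. apply (proj2 (dist_spec x y)); auto. Qed.
Lemma dist_hw x y : has_word_of_length gs (mul (inv x) y) (dist x y).
Proof. apply (proj1 (dist_spec x y)). Qed.

Lemma dist_ext x y x' y' : mul (inv x) y = mul (inv x') y' -> dist x y = dist x' y'.
Proof.
 intro E. apply Nat.le_antisymm; apply dist_le; [rewrite E|rewrite <- E]; apply dist_hw.
Qed.

Lemma dist_mul_l g x y : dist (mul g x) (mul g y) = dist x y.
Proof. apply dist_ext. rewrite inv_mul, <- mulA, mulKg; auto. Qed.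

Lemma dist_sym x y : dist x y = dist y x.
Proof.
 assert (forall x y, dist x y <= dist y x).
 { intros a b. apply dist_le. replace (mul (inv a) b) with (inv (mul (inv b) a)).
   apply hw_inv, dist_hw. rewrite inv_mul, inv_inv; auto. }
 apply Nat.le_antisymm; auto.
Qed.

Lemma dist_self x : dist x x = 0.
Proof. apply Nat.le_0_r. apply dist_le. rewrite mulVg. apply hw_nil. Qed.

Lemma dist_zero x y : dist x y = 0 -> x = y.
Proof.
 intro H. pose proof (dist_hw x y) as W. rewrite H in W. apply hw_zero in W.
 rewrite <- (mulKVg x y), W, mulg1; auto.
Qed.

Lemma dist_tri x y z : dist x z <= dist x y + dist y z.
Proof.
 apply dist_le. replace (mul (inv x) z) with (mul (mul (inv x) y) (mul (inv y) z)).
 apply hw_app; apply dist_hw. rewrite <- mulA, mulKVg; auto.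
Qed.

Lemma dist_geo x y a : a <= dist x y ->
  exists m, dist x m = a /\ dist m y = dist x y - a.
Proof.
 intro Ha. destruct (hw_split _ _ a (dist_hw x y) Ha) as [g1 [g2 [E [H1 H2]]]].
 exists (mul x g1).
 assert (dist x (mul x g1) <= a). { apply dist_le. rewrite mulKg; auto. }
 assert (dist (mul x g1) y <= dist x y - a).
 { apply dist_le. rewrite inv_mul, <- mulA, E, mulKg; auto. }
 pose proof (dist_tri x (mul x g1) y). lia.
Qed.

Lemma dist_one_ball g R : dist one g <= R -> In g (ball R).
Proof.
 intro H. pose proof (dist_hw one g) as W. rewrite inv_one, mul1g in W. eapply in_ball; eauto.
Qed.

Variable delta : nat.
Hypothesis Hhyp : gromov_hyperbolic_metric G gs delta.

Lemma four x y z w :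
 (Z.of_nat (dist x w) + Z.of_nat (dist y w) - Z.of_nat (dist x y) + 2 * Z.of_nat delta >=
     Z.min (Z.of_nat (dist x w) + Z.of_nat (dist z w) - Z.of_nat (dist x z))
           (Z.of_nat (dist y w) + Z.of_nat (dist z w) - Z.of_nat (dist y z)))%Z.
Proof. exact (Hhyp x y z w _ _ _ _ _ _ (dist_spec _ _) (dist_spec _ _) (dist_spec _ _) (dist_spec _ _) (dist_spec _ _) (dist_spec _ _)). Qed.

Lemma mid p q m : dist p m + dist m q = dist p q -> forall x,
  dist x m + dist p m <= dist x p + 2 * delta \/ dist x m + dist m q <= dist x q + 2 * delta.
Proof.
 intros E x. pose proof (four p q x m) as F.
 rewrite (dist_sym q m), (dist_sym p x), (dist_sym q x) in F. lia.
Qed.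

End Metric.
From Stdlib Require Import List ZArith Lia Arith Classical ClassicalEpsilon.
Import ListNotations.

Section QC.
Context {G : group}.
Variable gs : list G.
Hypothesis Hgen : generates G gs.
Variable delta : nat.
Hypothesis Hhyp : gromov_hyperbolic_metric G gs delta.

Notation d := (dist G gs Hgen).

Lemma le_list_sum (f : G -> nat) l x : In x l -> f x <= list_sum (map f l).
Proof. induction l; simpl; [tauto|]. intros [<-|I]; [lia|]. specialize (IHl I); lia. Qed.

Lemma quasi_center (K : G -> Prop) : elliptic_subgroup K ->
  exists c, forall x, K x -> d c (mul x c) <= 4 * delta + 1.
Proof.
 intros [SK [l Hl]].
 destruct (nat_min (fun k => exists p, forall x, K x -> d p x <= k)
             (list_sum (map (d one) l))) as [r [[c Hc] Hmin]].
 { exists one. intros x Kx. apply le_list_sum; auto. }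
 exists c. intros h0 Kh0.
 assert (Hc2 : forall x, K x -> d (mul h0 c) x <= r).
 { intros x Kx. rewrite <- (mulKVg h0 x), dist_mul_l. apply Hc.
   destruct SK as [_ [Hm Hi]]. apply Hm; auto. }
 remember (d c (mul h0 c)) as D.
 destruct (dist_geo G gs Hgen c (mul h0 c) (D / 2)) as [m [E1 E2]].
 { rewrite <- HeqD. apply Nat.div_le_upper_bound; lia. }
 rewrite <- HeqD in E2.
 pose proof (Nat.div_mod D 2) as DM. pose proof (Nat.mod_upper_bound D 2) as DU.
 assert (D / 2 <= 2 * delta).
 { destruct (le_gt_dec (D / 2) (2 * delta)) as [|Hgt]; auto. exfalso.
   assert (Hall : forall x, K x -> d m x + 1 <= r).
   { intros x Kx. pose proof (Hc x Kx). pose proof (Hc2 x Kx).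
     rewrite (dist_sym G gs Hgen c x) in *. rewrite (dist_sym G gs Hgen (mul h0 c) x) in *.
     rewrite (dist_sym G gs Hgen m x).
     destruct (mid G gs Hgen delta Hhyp c (mul h0 c) m) with (x := x) as [A|A]; lia. }
   assert (r >= 1). { specialize (Hall one (proj1 SK)). lia. }
   assert (r <= r - 1). { apply Hmin. exists m. intros x Kx. specialize (Hall x Kx). lia. }
   lia. }
 lia.
Qed.

Lemma conj_ball (K : G -> Prop) : elliptic_subgroup K ->
  exists c, forall x, K x -> In (mul (mul (inv c) x) c) (ball G gs (4 * delta + 1)).
Proof.
 intros E. destruct (quasi_center K E) as [c Hc]. exists c. intros x Kx.
 apply dist_one_ball with (Hgen := Hgen). rewrite (dist_ext G gs Hgen one _ c (mul x c)).
 apply Hc; auto. rewrite inv_one, mul1g, mulA; auto.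
Qed.

Lemma size_bound (K : G -> Prop) l : elliptic_subgroup K -> NoDup l -> (forall x, In x l -> K x) ->
  length l <= length (ball G gs (4 * delta + 1)).
Proof.
 intros E N Hl. destruct (conj_ball K E) as [c Hc].
 rewrite <- (length_map (fun x => mul (mul (inv c) x) c)).
 apply NoDup_incl_length.
 - apply NoDup_map_NoDup_ForallPairs; auto. intros a b _ _ Eab.
   apply mul_cancel_r, mul_cancel_l in Eab; auto.
 - intros y Hy. apply in_map_iff in Hy. destruct Hy as [x [<- Ix]]. apply Hc; auto.
Qed.

Lemma exists_maximal (H : G -> Prop) : elliptic_subgroup H -> exists M, maximal_elliptic M /\ forall x, H x -> M x.
Proof.
 intros EH.
 set (Q := fun n => exists K, elliptic_subgroup K /\ (forall x, H x -> K x) /\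
            exists l, NoDup l /\ length l = n /\ forall x, In x l -> K x).
 assert (Bnd : forall n, Q n -> n <= length (ball G gs (4 * delta + 1))).
 { intros n [K [EK [_ [l [Nl [<- Il]]]]]]. eapply size_bound; eauto. }
 assert (Q0 : Q 0).
 { exists H; split; auto. split; auto. exists nil; simpl; repeat split; auto. constructor. tauto. }
 destruct (nat_max Q _ 0 Bnd Q0) as [n [[K [EK [HK [l [Nl [Ln Il]]]]]] Hmax]].
 exists K. split; auto. split; auto. intros K' EK' KK' x K'x.
 apply NNPP. intro nK. assert (S n <= n); [|lia]. apply Hmax. exists K'. split; auto. split; auto.
 exists (x :: l). split. { constructor; [intro I; apply nK, Il; auto | auto]. }
 split. { simpl; lia. } intros y [<-|I]; auto.
Qed.

Lemma dir12 : (forall H : G -> Prop, maximal_elliptic H -> malnormal H) ->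
   (forall H : G -> Prop, elliptic_subgroup H -> nontrivial H ->
      forall g : G, loxodromic g -> ~ normalises g H).
Proof.
 intros H1 H EH [h [Hh hne]] g Lg [N1 N2].
 destruct (exists_maximal H EH) as [M [MM HM]].
 assert (Ng : ~ M g). { intro Mg. exact (elliptic_not_lox M g (proj1 MM) Mg Lg). }
 apply hne. apply (conj_one g h).
 apply (H1 M MM g Ng (conj g h) (HM _ (N1 h Hh))). exists h; split; auto.
Qed.

End QC.
From Stdlib Require Import List ZArith Lia Arith Classical ClassicalEpsilon.
Import ListNotations.

Lemma firstn_split {A} (w : list A) a b : a <= b ->
  firstn b w = firstn a w ++ firstn (b - a) (skipn a w).
Proof.
 revert a b. induction w as [|x w IH]; intros a b H.
 - destruct a, b; simpl; auto; destruct (b - a); auto. 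
 - destruct a; simpl. rewrite Nat.sub_0_r; auto. destruct b; [lia|]. simpl.
   rewrite (IH a b); auto; lia.
Qed.

Lemma Forall_firstn' {A} (P : A -> Prop) n l : Forall P l -> Forall P (firstn n l).
Proof. intro F. rewrite <- (firstn_skipn n l) in F. apply Forall_app in F. tauto. Qed.
Lemma Forall_skipn' {A} (P : A -> Prop) n l : Forall P l -> Forall P (skipn n l).
Proof. intro F. rewrite <- (firstn_skipn n l) in F. apply Forall_app in F. tauto. Qed.

Section Lox.
Context {G : group}.
Variable gs : list G.
Hypothesis Hgen : generates G gs.
Variable delta : nat.
Hypothesis Hhyp : gromov_hyperbolic_metric G gs delta.

Notation d := (dist G gs Hgen).

Lemma lox_disp (z x : G) :
  d x (mul z x) + 2 * delta + 1 <= d x (mul z (mul z x)) -> loxodromic z.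
Proof.
 intro Hc.
 set (p := fun n => mul (gpow z n) x).
 assert (pS : forall n, p (S n) = mul z (p n)). { intro n; unfold p; simpl; rewrite mulA; auto. }
 assert (p0 : p 0 = x). { unfold p; simpl; apply mul1g. }
 assert (p1 : p 1 = mul z x). { rewrite pS, p0; auto. }
 assert (p2 : p 2 = mul z (mul z x)). { rewrite pS, p1; auto. }
 assert (Hsh : forall n m, d (p (S n)) (p (S m)) = d (p n) (p m)).
 { intros n m. rewrite (pS n), (pS m), dist_mul_l; auto. }
 set (l := d x (mul z x)).
 assert (Hstep : forall n, d (p n) (p (S n)) = l).
 { induction n. - rewrite p0, p1; reflexivity. - rewrite Hsh; auto. }
 assert (Htrip : forall n, d (p n) (p (S (S n))) = d x (mul z (mul z x))).
 { induction n. - rewrite p0, p2; reflexivity. - rewrite Hsh; auto. }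
 set (D2 := d x (mul z (mul z x))) in *.
 assert (HD2 : D2 <= l + l).
 { pose proof (dist_tri G gs Hgen x (mul z x) (mul z (mul z x))).
   rewrite (dist_mul_l G gs Hgen z x (mul z x)) in H. exact H. }
 assert (Hinc : forall n, d (p 0) (p n) + 1 <= d (p 0) (p (S n)) /\
                          (Z.of_nat (d (p O) (p (S n))) - Z.of_nat (d (p O) (p n)) >=
                           Z.of_nat D2 - Z.of_nat l - 2 * Z.of_nat delta)%Z).
 { induction n as [|n [_ IH]].
   - rewrite (dist_self G gs Hgen). pose proof (Hstep 0). split; lia.
   - pose proof (four G gs Hgen delta Hhyp (p n) (p (S (S n))) (p 0) (p (S n))) as F.
     pose proof (Hstep n). pose proof (Hstep (S n)). pose proof (Htrip n).
     rewrite (dist_sym G gs Hgen (p (S (S n))) (p (S n))) in F.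
     rewrite (dist_sym G gs Hgen (p n) (p 0)) in F.
     rewrite (dist_sym G gs Hgen (p (S (S n))) (p 0)) in F.
     split; lia. }
 intros n Hn E.
 assert (d (p 0) (p n) >= n).
 { clear E Hn. induction n; [lia|]. pose proof (proj1 (Hinc n)). lia. }
 assert (p n = x). { unfold p. rewrite E, mul1g; auto. }
 rewrite H0, p0, (dist_self G gs Hgen) in H. lia.
Qed.

Lemma geodesic_path (c : G) : exists m : nat -> G, m 0 = one /\ m (d one c) = c /\
  forall a b, a <= b <= d one c -> d (m a) (m b) = b - a.
Proof.
 set (N := d one c).
 destruct (dist_hw G gs Hgen one c) as [w [F [E L0]]]. assert (L : length w = N) by exact L0. clear L0.
 exists (fun t => word_prod (firstn t w)).
 assert (mN : word_prod (firstn N w) = c).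
 { rewrite firstn_all2 by lia. rewrite E, inv_one, mul1g; auto. }
 assert (Hub : forall a b, a <= b <= N -> d (word_prod (firstn a w)) (word_prod (firstn b w)) <= b - a).
 { intros a b Hab. apply (dist_le G gs Hgen).
   rewrite (firstn_split w a b) by lia. rewrite word_prod_app, mulKg.
   exists (firstn (b - a) (skipn a w)). repeat split.
   apply Forall_firstn', Forall_skipn'; auto.
   rewrite firstn_length_le; auto. rewrite length_skipn; lia. }
 split; [reflexivity|]. split; [exact mN|].
 intros a b Hab.
 pose proof (Hub 0 a ltac:(lia)). pose proof (Hub b N ltac:(lia)). pose proof (Hub a b Hab).
 pose proof (dist_tri G gs Hgen (word_prod (firstn 0 w)) (word_prod (firstn a w)) (word_prod (firstn b w))).
 pose proof (dist_tri G gs Hgen (word_prod (firstn 0 w)) (word_prod (firstn b w)) (word_prod (firstn N w))).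
 rewrite mN in *. simpl firstn in *. simpl word_prod in *. unfold N in *. lia.
Qed.

End Lox.
From Stdlib Require Import List ZArith Lia Arith Classical ClassicalEpsilon.
Import ListNotations.

Section Lox2.
Context {G : group}.
Variable gs : list G.
Hypothesis Hgen : generates G gs.
Variable delta : nat.
Hypothesis Hhyp : gromov_hyperbolic_metric G gs delta.

Notation d := (dist G gs Hgen).

Lemma pair_lox (y : G) (m : nat -> G) N i j :
  (forall a b, a <= b <= N -> d (m a) (m b) = b - a) ->
  i + (4 * delta + 1) <= j -> j + (delta + 1) <= N ->
  mul (inv (m i)) (mul y (m i)) = mul (inv (m j)) (mul y (m j)) ->
  mul (inv (m i)) (m (i + (delta + 1))) = mul (inv (m j)) (m (j + (delta + 1))) ->
  exists z, mul z y = mul y z /\ loxodromic z.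
Proof.
 intros Hd Hij HjN Hu Hv. set (K := delta + 1) in *.
 set (z := mul (m j) (inv (m i))).
 assert (zi : mul z (m i) = m j). { unfold z; apply mulgKV. }
 assert (zK : mul z (m (i + K)) = m (j + K)).
 { rewrite <- (mulKVg (m i) (m (i + K))), mulA, zi, Hv, mulKVg; auto. }
 exists z. split.
 - apply (mul_cancel_r (m i)). unfold z. repeat rewrite <- mulA.
   rewrite mulVg, mulg1, Hu, mulKVg; auto.
 - apply (lox_disp gs Hgen delta Hhyp z (m i)). rewrite zi.
   set (q := mul z (m j)).
   assert (E1 : d q (m j) = j - i).
   { transitivity (d (mul z (m j)) (mul z (m i))). rewrite zi; reflexivity.
     rewrite dist_mul_l, dist_sym. apply Hd; lia. }
   assert (E2 : d (m (j + K)) q = j - i - K).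
   { transitivity (d (mul z (m (i + K))) (mul z (m j))). rewrite zK; reflexivity.
     rewrite dist_mul_l. replace (j - i - K) with (j - (i + K)) by lia. apply Hd; lia. }
   pose proof (four G gs Hgen delta Hhyp (m i) (m (j + K)) q (m j)) as F.
   rewrite (Hd i j) in F by lia. rewrite (dist_sym G gs Hgen (m (j + K)) (m j)) in F.
   rewrite (Hd j (j + K)) in F by lia. rewrite (Hd i (j + K)) in F by lia.
   rewrite E1, E2 in F. rewrite (Hd i j) by lia. lia.
Qed.

Lemma far_lox (y : G) : (forall R, exists c, mul c y = mul y c /\ R < d one c) ->
  exists z, mul z y = mul y z /\ loxodromic z.
Proof.
 intro Hfar.
 set (D0 := d one y). set (K := delta + 1). set (T := 4 * delta + 1).
 set (BA := ball G gs (D0 + 2 * delta)). set (BB := ball G gs K).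
 set (B := length (list_prod BA BB)).
 destruct (Hfar (B * T + K)) as [c [Cc Nc]].
 destruct (geodesic_path gs Hgen c) as [m [m0 [mN Hd]]].
 set (N := d one c) in *.
 assert (Disp : forall t, t <= N -> d (m t) (mul y (m t)) <= D0 + 2 * delta).
 { intros t Ht.
   assert (A1 : d one (m t) = t). { rewrite <- m0. rewrite Hd; lia. }
   assert (A2 : d (m t) c = N - t). { rewrite <- mN. apply Hd; lia. }
   destruct (mid G gs Hgen delta Hhyp one c (m t)) with (x := mul y (m t)) as [C|C].
   - rewrite A1, A2. unfold N; lia.
   - pose proof (dist_tri G gs Hgen (mul y (m t)) y one).
     assert (d (mul y (m t)) y = t).
     { transitivity (d (mul y (m t)) (mul y one)). rewrite mulg1; auto.
       rewrite dist_mul_l, dist_sym; auto. }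
     rewrite (dist_sym G gs Hgen y one) in H.
     fold D0 in H. rewrite dist_sym. lia.
   - pose proof (dist_tri G gs Hgen (mul y (m t)) (mul y c) c).
     rewrite dist_mul_l in H. rewrite <- Cc in H.
     assert (d (mul c y) c = D0).
     { transitivity (d (mul c y) (mul c one)). rewrite mulg1; auto.
       rewrite dist_mul_l, dist_sym; auto. }
     fold D0 in H. rewrite dist_sym. lia. }
 set (u := fun t => mul (inv (m t)) (mul y (m t))).
 set (v := fun t => mul (inv (m t)) (m (t + K))).
 set (f := fun k => (u (k * T), v (k * T))).
 assert (Hin : forall k, k <= B -> In (f k) (list_prod BA BB)).
 { intros k Hk. assert (k * T <= B * T) by (apply Nat.mul_le_mono_r; auto).
   apply in_prod.
   - apply (dist_one_ball G gs Hgen). unfold u.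
     rewrite (dist_ext G gs Hgen one _ (m (k * T)) (mul y (m (k * T)))).
     apply Disp; lia. rewrite inv_one, mul1g; auto.
   - apply (dist_one_ball G gs Hgen). unfold v.
     rewrite (dist_ext G gs Hgen one _ (m (k * T)) (m (k * T + K))).
     rewrite Hd; lia. rewrite inv_one, mul1g; auto. }
 destruct (classic (exists k1 k2, k1 < k2 <= B /\ f k1 = f k2)) as [[k1 [k2 [Hk E]]]|Hno].
 - unfold f in E. injection E as Eu Ev.
   apply (pair_lox y m N (k1 * T) (k2 * T) Hd); auto.
   + assert (S k1 * T <= k2 * T) by (apply Nat.mul_le_mono_r; lia). simpl in H. unfold T in *. lia.
   + assert (k2 * T <= B * T) by (apply Nat.mul_le_mono_r; lia). unfold K in *. lia.
 - exfalso.
   assert (ND : NoDup (map f (seq 0 (S B)))).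
   { apply NoDup_map_NoDup_ForallPairs; [|apply seq_NoDup].
     intros a b Ia Ib E. apply in_seq in Ia, Ib.
     destruct (lt_eq_lt_dec a b) as [[lt|eq]|gt]; auto.
     - exfalso; apply Hno; exists a, b; split; auto; lia.
     - exfalso; apply Hno; exists b, a; split; auto; lia. }
   apply NoDup_incl_length with (l' := list_prod BA BB) in ND.
   + rewrite length_map, length_seq in ND. fold B in ND. lia.
   + intros p Ip. apply in_map_iff in Ip. destruct Ip as [k [<- Ik]]. apply in_seq in Ik.
     apply Hin; lia.
Qed.

End Lox2.
From Stdlib Require Import List ZArith Lia Arith Classical ClassicalEpsilon.
Import ListNotations.

Section GrpMore.
Context {G : group}.

Lemma conj_mul (g a b : G) : mul (conj g a) (conj g b) = conj g (mul a b).
Proof. unfold conj. repeat rewrite <- mulA. rewrite mulKg. auto. Qed.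

Lemma conj_inj (g a b : G) : conj g a = conj g b -> a = b.
Proof. unfold conj. intro E. apply mul_cancel_r, mul_cancel_l in E; auto. Qed.

Lemma pow_inv (x : G) n k : 0 < n -> gpow x n = one -> inv (gpow x k) = gpow x (k * (n - 1)).
Proof.
 intros Hn E. apply inv_uniq. rewrite <- gpow_add.
 replace (k + k * (n - 1)) with (n * k) by nia. apply gpow_mul; auto.
Qed.

Lemma pow_comm (z y : G) k : mul z y = mul y z -> mul z (gpow y k) = mul (gpow y k) z.
Proof.
 intro C. induction k; simpl. rewrite mul1g, mulg1; auto.
 rewrite mulA, C, <- mulA, IHk, mulA; auto.
Qed.

Lemma cent_sub (y : G) : subgroup (fun x => mul x y = mul y x).
Proof.
 split; [|split].
 - rewrite mul1g, mulg1; auto.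
 - intros a b Ha Hb. rewrite <- mulA, Hb, mulA, Ha, mulA; auto.
 - intros a Ha. apply (mul_cancel_l a). rewrite mulKVg, mulA, Ha, mulgK; auto.
Qed.

Lemma powers_elliptic (y : G) n : 0 < n -> gpow y n = one ->
  elliptic_subgroup (fun x => exists k, x = gpow y k).
Proof.
 intros Hn E. split; [split; [|split]|].
 - exists 0; auto.
 - intros a b [k1 ->] [k2 ->]. exists (k1 + k2). rewrite gpow_add; auto.
 - intros a [k ->]. exists (k * (n - 1)). apply pow_inv; auto.
 - exists (map (gpow y) (seq 0 n)). intros x [k ->]. rewrite (gpow_mod y n k E) by lia.
   apply in_map. apply in_seq. pose proof (Nat.mod_upper_bound k n). lia.
Qed.

End GrpMore.

Section Dir21.
Context {G : group}.
Variable gs : list G.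
Hypothesis Hgen : generates G gs.
Variable delta : nat.
Hypothesis Hhyp : gromov_hyperbolic_metric G gs delta.
Notation d := (dist G gs Hgen).

Hypothesis H2 : forall H : G -> Prop, elliptic_subgroup H -> nontrivial H ->
      forall g : G, loxodromic g -> ~ normalises g H.

Lemma cent_finite (y : G) n : y <> one -> 0 < n -> gpow y n = one ->
  finite_set (fun x => mul x y = mul y x).
Proof.
 intros yne Hn E. apply NNPP. intro NF.
 assert (far : forall R, exists c, mul c y = mul y c /\ R < d one c).
 { intro R. apply NNPP. intro Hno. apply NF. exists (ball G gs R). intros x Cx.
   apply (dist_one_ball G gs Hgen). destruct (le_gt_dec (d one x) R); auto.
   exfalso; apply Hno; eauto. }
 destruct (far_lox gs Hgen delta Hhyp y far) as [z [Cz Lz]].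
 apply (H2 _ (powers_elliptic y n Hn E)) with (g := z); auto.
 - exists y; split; auto. exists 1; simpl; rewrite mulg1; auto.
 - split.
   + intros h [k ->]. exists k. unfold conj. rewrite pow_comm, mulgK; auto.
   + intros y' Hy'. exists y'; split; auto. destruct Hy' as [k ->].
     unfold conj. rewrite pow_comm, mulgK; auto.
Qed.

Hypothesis Hab : forall H : G -> Prop, elliptic_subgroup H -> abelian_set H.

Lemma dir21 : forall H : G -> Prop, maximal_elliptic H -> malnormal H.
Proof.
 intros M [EM Mmax] g Ng y My [h [Mh Ey]].
 apply NNPP. intro yne.
 destruct (elliptic_order M y EM My) as [n [Hn En]].
 set (Cy := fun x => mul x y = mul y x).
 assert (ECy : elliptic_subgroup Cy). { split. apply cent_sub. apply (cent_finite y n); auto. }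
 assert (MC : forall x, M x -> Cy x). { intros x Mx. apply (Hab M EM); auto. }
 assert (CM : forall x, Cy x -> M x). { apply Mmax; auto. }
 assert (S4 : forall m, M m -> M (conj g m)).
 { intros m Mm. apply CM. unfold Cy. rewrite Ey, !conj_mul. f_equal. apply (Hab M EM); auto. }
 destruct (exact_list M (proj2 EM)) as [lM [NM IM]].
 assert (Surj : forall y', M y' -> exists h', M h' /\ y' = conj g h').
 { intros y' My'.
   assert (incl lM (map (conj g) lM)).
   { apply NoDup_length_incl.
     - apply NoDup_map_NoDup_ForallPairs; auto. intros a b _ _ E. apply conj_inj in E; auto.
     - rewrite length_map; auto.
     - intros x Ix. apply in_map_iff in Ix. destruct Ix as [a [<- Ia]]. apply IM, S4, IM; auto. }
   apply IM, H in My'. apply in_map_iff in My'. destruct My' as [a [<- Ia]].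
   exists a; split; auto. apply IM; auto. }
 assert (NormM : normalises g M). { split; auto. }
 assert (NtM : nontrivial M). { exists y; split; auto. }
 destruct (classic (loxodromic g)) as [Lg|NLg].
 { exact (H2 M EM NtM g Lg NormM). }
 assert (exists k, 0 < k /\ gpow g k = one) as [k [Hk Ek]].
 { apply NNPP. intro C. apply NLg. intros k Hk E. apply C; eauto. }
 assert (push : forall j m, M m -> exists m', M m' /\ mul (gpow g j) m = mul m' (gpow g j)).
 { induction j; intros m Mm.
   - exists m; split; auto. simpl; rewrite mul1g, mulg1; auto.
   - destruct (IHj m Mm) as [m' [Mm' E]]. exists (conj g m'). split; auto.
     simpl. rewrite <- mulA, E, mulA. unfold conj. rewrite (mulA (mul (mul g m') (inv g)) g), mulgKV; auto. }
 set (F := fun x => exists m j, M m /\ x = mul m (gpow g j)).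
 assert (EF : elliptic_subgroup F).
 { destruct EM as [[M1 [Mmul Mi]] _]. split; [split; [|split]|].
   - exists one, 0. split; auto. simpl; rewrite mul1g; auto.
   - intros a b [m1 [j1 [M1' ->]]] [m2 [j2 [M2' ->]]].
     destruct (push j1 m2 M2') as [m' [Mm' E]]. exists (mul m1 m'), (j1 + j2). split; auto.
     rewrite gpow_add. rewrite <- (mulA m1 (gpow g j1)), (mulA (gpow g j1)), E.
     repeat rewrite <- mulA. auto.
   - intros a [m1 [j1 [M1' ->]]]. rewrite inv_mul, (pow_inv g k j1 Hk Ek).
     destruct (push (j1 * (k - 1)) (inv m1) (Mi _ M1')) as [m' [Mm' E]].
     exists m', (j1 * (k - 1)). split; auto.
   - exists (flat_map (fun m => map (fun j => mul m (gpow g j)) (seq 0 k)) lM).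
     intros x [m [j [Mm0 ->]]]. apply in_flat_map. exists m. split. apply IM; auto.
     rewrite (gpow_mod g k j Ek) by lia. apply in_map_iff. exists (j mod k). split; auto. apply in_seq.
     pose proof (Nat.mod_upper_bound j k). lia. }
 apply Ng. apply (Mmax F EF).
 - intros x Mx. exists x, 0. split; auto. simpl; rewrite mulg1; auto.
 - exists one, 1. split. exact (proj1 (proj1 EM)). simpl. rewrite mul1g, mulg1; auto.
Qed.

End Dir21.

Theorem lemma3p11 (G : group) :
  hyperbolic_group G ->
  (forall H : G -> Prop, elliptic_subgroup H -> abelian_set H) ->
  ((forall H : G -> Prop, maximal_elliptic H -> malnormal H) <->
   (forall H : G -> Prop, elliptic_subgroup H -> nontrivial H ->
      forall g : G, loxodromic g -> ~ normalises g H)).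
Proof.
 intros [gs [delta [Hgen Hhyp]]] Hab. split.
 - apply (dir12 gs Hgen delta Hhyp).
 - intro H2. apply (dir21 gs Hgen delta Hhyp H2 Hab).
Qed.
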